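(* Let $n$ be an even positive integer such that $n'=n/2$ is odd, and let $q$ be an odd prime power coprime to $n$. Then every orbit of the permutation $\tau_{n'}$ on the set $\mathbb{Z}_n/\mu_q$ of $q$-cosets has length $2$; in particular, Type-I duadic splittings of $\mathbb{Z}_n$ given by $\tau_{n'}$ exist.
   Context: $\mathbb{Z}_n=\mathbb{Z}/n\mathbb{Z}$. $\mu_q:\mathbb{Z}_n\to\mathbb{Z}_n$, $i\mapsto qi\bmod n$; the $q$-cosets are the orbits of $\mu_q$ on $\mathbb{Z}_n$, and $\mathbb{Z}_n/\mu_q$ is the set of $q$-cosets. For $t\in\mathbb{Z}_n$ with $qt\equiv t\pmod n$, $\tau_t:\mathbb{Z}_n\to\mathbb{Z}_n$, $i\mapsto i+t\bmod n$ (a $q$-translation); it maps $q$-cosets to $q$-cosets. Type-I duadic splittings of $\mathbb{Z}_n$ given by $\tau_t$ exist if there is a $\mu_q$-invariant subset $P\subseteq\mathbb{Z}_n$ (i.e. $\mu_q(P)=P$) such that $\mathbb{Z}_n=P\cup\tau_t(P)$ is a disjoint union. *)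

(* Defs.v *)
From mathcomp Require Import all_boot.
Set Implicit Arguments. Unset Strict Implicit. Unset Printing Implicit Defensive.

(* Z_n is represented by 'I_n (residues 0..n-1); any i : 'I_n witnesses 0 < n. *)
Lemma ord_pos n (i : 'I_n) : 0 < n.
Proof. exact: leq_ltn_trans (leq0n i) (ltn_ord i). Qed.

Definition mu n (q : nat) (i : 'I_n) : 'I_n :=
  Ordinal (ltn_pmod (q * i) (ord_pos i)).

Definition tau n (t : nat) (i : 'I_n) : 'I_n :=
  Ordinal (ltn_pmod (i + t) (ord_pos i)).

Definition qcoset n q (i : 'I_n) : {set 'I_n} := [set j | fconnect (mu q) i j].

Definition qcosets n q : {set {set 'I_n}} := [set qcoset q i | i : 'I_n].

Definition tauS n t (C : {set 'I_n}) : {set 'I_n} := tau t @: C.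

Definition q_translation n q t := q * t = t %[mod n].

Definition typeI_duadic_splitting_exists n q t :=
  q_translation n q t /\
  exists P : {set 'I_n},
    [/\ mu q @: P = P, P :&: tau t @: P = set0 & P :|: tau t @: P = setT].

Definition prime_power (q : nat) := exists p k, [/\ prime p, 0 < k & q = p ^ k].

(* Main.v *)
Require Import Defs.
From mathcomp Require Import all_boot.
From mathcomp Require Import zify.

Lemma order2 (T : finType) (f : T -> T) x : f (f x) = x -> f x != x -> order f x = 2.
Proof.
move=> ffx fx.
have Hc : fcycle f [:: x; f x] by rewrite /= ffx !eqxx.
have Hu : uniq [:: x; f x] by rewrite /= inE eq_sym fx.
by rewrite (order_cycle Hc Hu) // mem_head.
Qed.

Section S.
Variables (n : nat).
Hypotheses (n0 : 0 < n) (ev : ~~ odd n) (od : odd n./2).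

Lemma n2 : n = n./2 + n./2.
Proof. by rewrite -{1}(odd_double_half n) (negbTE ev) add0n addnn. Qed.

Lemma tau_tau (i : 'I_n) : tau n./2 (tau n./2 i) = i.
Proof.
apply: val_inj => /=; rewrite modnDml -addnA -n2.
by rewrite -modnDmr modnn addn0 modn_small.
Qed.

Lemma odd_tau (i : 'I_n) : odd (tau n./2 i) = ~~ odd i.
Proof. by rewrite /= odd_mod ?(negbTE ev) // oddD od addbT. Qed.

Lemma odd_mu q (i : 'I_n) : odd q -> odd (mu q i) = odd i.
Proof. by move=> oq; rewrite /= odd_mod ?(negbTE ev) // oddM oq. Qed.

Lemma mu_inj q : coprime q n -> injective (@mu n q).
Proof.
move=> cq.
have H : forall i j : 'I_n, j <= i -> q * i %% n = q * j %% n -> i = j.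
  move=> i j le /eqP.
  rewrite eqn_mod_dvd ?leq_mul2l ?le ?orbT // -mulnBr Gauss_dvdr; last by rewrite coprime_sym.
  move=> d; apply: ord_inj; apply/eqP; rewrite -(modn_small (ltn_ord i)) -(modn_small (ltn_ord j)).
  by rewrite eqn_mod_dvd.
move=> i j /(congr1 val) /= E.
case: (leqP j i) => [ji|/ltnW ij]; first exact: H.
by apply/esym/H.
Qed.

End S.

Theorem theorem4p5 (n q : nat) :
  0 < n -> ~~ odd n -> odd n./2 ->
  prime_power q -> odd q -> coprime q n ->
  (forall C, C \in qcosets n q -> order (tauS n./2) C = 2) /\
  typeI_duadic_splitting_exists n q n./2.
Proof.
move=> n0 ev od _ oq cq; split.
  move=> C /imsetP [i _ ->]; apply: order2.
    apply/setP => j; apply/imsetP/idP.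
      move=> [k /imsetP [l lC ->] ->]; by rewrite tau_tau.
    move=> jC; exists (tau n./2 j); first by apply: imset_f.
    by rewrite tau_tau.
  apply/negP => /eqP E.
  have : tau n./2 i \in tauS n./2 (qcoset q i) by apply: imset_f; rewrite inE connect0.
  rewrite E inE => /(fconnect_invariant (k := fun j : 'I_n => odd j)) H.
  have := H _; rewrite odd_tau //.
  have inv : invariant (mu q) (fun j : 'I_n => odd j) =1 xpredT.
    by move=> j; rewrite /invariant /= odd_mu ?eqxx.
  by move/(_ inv); case: (odd i).
split.
  rewrite /q_translation -(odd_double_half q) oq mulnDl mul1n -muln2 -mulnA.
  by rewrite [2 * _]mulnC muln2 -addnn -n2 // addnC modnMDl.
exists [set i : 'I_n | ~~ odd i]; split.
- apply/eqP; rewrite eqEcard card_imset ?leqnn ?andbT; last exact: mu_inj.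
  apply/subsetP => j /imsetP [i]; rewrite !inE => oi ->.
  by rewrite odd_mu.
- apply/setP => j; rewrite !inE; apply/negP => /andP [oj /imsetP [i]].
  by rewrite inE => oi E; move: oj; rewrite E odd_tau // oi.
- apply/setP => j; rewrite !inE; case oj: (odd j) => //=.
  apply/imsetP; exists (tau n./2 j); last by rewrite tau_tau.
  by rewrite inE odd_tau // oj.
Qed.
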